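(* Let $M\in\mathrm{GL}(2,\mathbb{Z})$ with $\det(M)=-1$. If $M$ is reversible mod $n$ for infinitely many $n\in\mathbb{N}$, then $M^2=\mathbb{1}$.
   Context: $M$ is reversible mod $n$ if there exists $R\in\mathrm{GL}(2,\mathbb{Z}/n\mathbb{Z})$ with $RMR^{-1}\equiv M^{-1}\pmod n$. *)

(* Defs.v *)
From mathcomp Require Import all_boot all_algebra.
Set Implicit Arguments. Unset Strict Implicit. Unset Printing Implicit Defensive.
Import GRing.Theory.
Local Open Scope ring_scope.

(* Reduction mod n of an integer matrix, as a matrix over 'Z_n (meaningful for n >= 2). *)
Definition red_mx (n : nat) (M : 'M[int]_2) : 'M['Z_n]_2 :=
  map_mx (fun z : int => z%:~R) M.

(* M (with det M = +-1, so M^{-1} is an integer matrix) is reversible mod n: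
   there is R in GL(2, Z/nZ) with R M R^{-1} = M^{-1} mod n.
   For n = 1, Z/1Z is the zero ring and every M is reversible; we also set
   n = 0 to True (irrelevant for "infinitely many n"). *)
Definition reversible_mod (n : nat) (M : 'M[int]_2) : Prop :=
  if (1 < n)%N then
    exists R : 'M['Z_n]_2,
      R \in unitmx /\ R *m red_mx n M *m invmx R = red_mx n (invmx M)
  else True.

(* Main.v *)
Require Import Defs.
From mathcomp Require Import all_boot all_algebra.
From mathcomp Require Import zify.
Import GRing.Theory.
Local Open Scope ring_scope.

Lemma entries2 (R : Type) (A : 'M[R]_2) :
  exists f : nat -> nat -> R, forall i j : 'I_2, A i j = f i j.
Proof.
exists (fun i j => A (inord i) (inord j)) => i j.
by rewrite !inord_val.
Qed.

Lemma det2 (R : comNzRingType) (A : 'M[R]_2) :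
  \det A = A 0 0 * A 1 1 - A 0 1 * A 1 0.
Proof.
rewrite (expand_det_row _ 0) !big_ord_recr big_ord0 /= /cofactor !det_mx11 !mxE /=.
have [f E] := @entries2 R A; rewrite !E /=.
rewrite /= expr0 expr1 !mul1r add0r mulN1r mulrN.
by [].
Qed.

Lemma tr2 (R : comNzRingType) (A : 'M[R]_2) : \tr A = A 0 0 + A 1 1.
Proof.
rewrite /mxtrace !big_ord_recr big_ord0 /= add0r.
have [f E] := @entries2 R A; rewrite !E /=.
by [].
Qed.

Lemma tr_adj2 (R : comNzRingType) (A : 'M[R]_2) : \tr (\adj A) = \tr A.
Proof.
rewrite /mxtrace !big_ord_recr !big_ord0 /= !mxE /cofactor.
rewrite !det_mx11 !mxE /=.
have [f E] := @entries2 R A; rewrite !E /=.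
rewrite /= expr0 expr2 mulN1r opprK !mul1r !add0r addrC.
by [].
Qed.

Lemma invmx_int (M : 'M[int]_2) : \det M = -1 -> invmx M = - \adj M.
Proof.
move=> dM; rewrite /invmx unitmxE dM unitrN1 invrN1.
by rewrite scaleN1r.
Qed.

Lemma tr_red m (A : 'M[int]_2) :
  \tr (red_mx m.+2 A) = (\tr A)%:~R.
Proof.
by rewrite !tr2 /red_mx !mxE intrD.
Qed.

Lemma Zp_nat0 m (k : nat) : (k%:R : 'Z_(m.+2)) = 0 -> (m.+2 %| k)%N.
Proof.
move=> H; have := congr1 val H; rewrite Zp_nat /=.
by move=> /eqP; rewrite /dvdn.
Qed.

Lemma Zp_int0 m (z : int) : (z%:~R : 'Z_(m.+2)) = 0 -> (m.+2 %| absz z)%N.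
Proof.
case: z => k /=.
  by move=> /Zp_nat0.
by rewrite NegzE mulrNz => /eqP; rewrite oppr_eq0 => /eqP /Zp_nat0.
Qed.

Lemma tr_zero (M : 'M[int]_2) :
  \det M = -1 ->
  (forall N : nat, exists n : nat, (N < n)%N /\ reversible_mod n M) ->
  \tr M + \tr M = 0.
Proof.
move=> dM H.
have [n [Nn]] := H (absz (\tr M + \tr M)).
case: n Nn => [//|[|m]] Nn.
  by move=> _; apply/eqP; rewrite -absz_eq0; move: Nn; case: (absz _).
rewrite /reversible_mod /= => -[R [uR HR]].
have Ht := congr1 mxtrace HR.
rewrite mxtrace_mulC mulmxA mulVmx // mul1mx !tr_red invmx_int //= in Ht.
rewrite linearN /= tr_adj2 intrN in Ht.
have : ((\tr M + \tr M)%:~R : 'Z_(m.+2)) = 0.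
  by rewrite intrD {1}Ht addNr.
move=> /Zp_int0 Hd.
apply/eqP; rewrite -absz_eq0; apply/negPn/negP => nz.
have := dvdn_leq _ Hd; rewrite lt0n nz => /(_ isT).
by rewrite leqNgt Nn.
Qed.

Theorem corollary4p12 (M : 'M[int]_2) :
  \det M = -1 ->
  (forall N : nat, exists n : nat, (N < n)%N /\ reversible_mod n M) ->
  M *m M = 1%:M.
Proof.
move=> dM H.
have Ht := @tr_zero M dM H.
rewrite tr2 in Ht; rewrite det2 in dM.
apply/matrixP => i j; rewrite !mxE !big_ord_recr big_ord0 /=.
have [f E] := @entries2 int M; rewrite !E /= in Ht dM *.
have e1 : (1 %% 2 = 1)%N by [].
rewrite e1 in Ht dM.
case: i => [[|[|//]] ?]; case: j => [[|[|//]] ?] /=; nia.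
Qed.
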